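(* Consider the equation $u_{tx}=u-i|u|^2u_x$. Let $k,\Omega\in\mathbb{R}$ and let $\varphi,\theta:\mathbb{R}\to\mathbb{R}$ be $C^2$ functions such that $u(x,t)=\varphi(x)e^{i(kx-\Omega t+\theta(x))}$ (i.e. a traveling wave of the form $\varphi(x-ct)e^{i(kx-\Omega t+\theta(x-ct))}$ with speed $c=0$) is a solution. Then $\varphi$ is constant. If moreover this constant is nonzero, then $\Omega\neq\varphi^2$ and $\theta_x$ is constant, given by $$\theta_x=\frac{k\varphi^2-k\Omega+1}{\Omega-\varphi^2}.$$ *)

(* Defs.v *)
From Stdlib Require Import Reals.
Open Scope R_scope.

Record Cx := mkC { Re : R; Im : R }.

Definition Cadd (z w : Cx) : Cx := mkC (Re z + Re w) (Im z + Im w).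
Definition Csub (z w : Cx) : Cx := mkC (Re z - Re w) (Im z - Im w).
Definition Cmul (z w : Cx) : Cx :=
  mkC (Re z * Re w - Im z * Im w) (Re z * Im w + Im z * Re w).
Definition Cofr (a : R) : Cx := mkC a 0.
Definition Ci : Cx := mkC 0 1.
Definition Cnorm2 (z : Cx) : R := Re z ^ 2 + Im z ^ 2.
Definition Cexpi (a : R) : Cx := mkC (cos a) (sin a).

Definition Cderiv (f : R -> Cx) (x : R) (l : Cx) : Prop :=
  derivable_pt_lim (fun y => Re (f y)) x (Re l) /\
  derivable_pt_lim (fun y => Im (f y)) x (Im l).

Definition is_solution (u : R -> R -> Cx) : Prop :=
  exists ut ux utx : R -> R -> Cx,
    (forall x t, Cderiv (fun s => u x s) t (ut x t)) /\
    (forall x t, Cderiv (fun y => u y t) x (ux x t)) /\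
    (forall x t, Cderiv (fun y => ut y t) x (utx x t)) /\
    (forall x t, utx x t =
        Csub (u x t) (Cmul Ci (Cmul (Cofr (Cnorm2 (u x t))) (ux x t)))).

Definition C2 (f : R -> R) : Prop :=
  exists f1 f2 : R -> R,
    (forall x, derivable_pt_lim f x (f1 x)) /\
    (forall x, derivable_pt_lim f1 x (f2 x)) /\
    continuity f2.

(* Main.v *)
Require Import Defs.
From Stdlib Require Import Reals Lra Lia Psatz FunctionalExtensionality.
Open Scope R_scope.

Lemma dlim_eq f x l l' : derivable_pt_lim f x l -> l = l' -> derivable_pt_lim f x l'.
Proof. intros H ->; exact H. Qed.
Lemma Dconst (a x : R) : derivable_pt_lim (fun _ => a) x 0.
Proof. apply derivable_pt_lim_const. Qed.
Lemma Did (x : R) : derivable_pt_lim (fun y => y) x 1.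
Proof. apply derivable_pt_lim_id. Qed.
Lemma Dplus f g x lf lg : derivable_pt_lim f x lf -> derivable_pt_lim g x lg ->
  derivable_pt_lim (fun y => f y + g y) x (lf + lg).
Proof. intros; apply (derivable_pt_lim_plus f g); auto. Qed.
Lemma Dminus f g x lf lg : derivable_pt_lim f x lf -> derivable_pt_lim g x lg ->
  derivable_pt_lim (fun y => f y - g y) x (lf - lg).
Proof. intros; apply (derivable_pt_lim_minus f g); auto. Qed.
Lemma Dmul f g x lf lg : derivable_pt_lim f x lf -> derivable_pt_lim g x lg ->
  derivable_pt_lim (fun y => f y * g y) x (lf * g x + f x * lg).
Proof. intros; apply (derivable_pt_lim_mult f g); auto. Qed.
Lemma Dcos g x l : derivable_pt_lim g x l ->
  derivable_pt_lim (fun y => cos (g y)) x (- sin (g x) * l).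
Proof. intros H. apply (derivable_pt_lim_comp g cos); auto. apply derivable_pt_lim_cos. Qed.
Lemma Dsin g x l : derivable_pt_lim g x l ->
  derivable_pt_lim (fun y => sin (g y)) x (cos (g x) * l).
Proof. intros H. apply (derivable_pt_lim_comp g sin); auto. apply derivable_pt_lim_sin. Qed.

Ltac dt H1 H2 := repeat first [ eapply Dconst | eapply Did | eapply Dminus
  | eapply Dplus | eapply Dmul | eapply Dcos | eapply Dsin | eapply H1 | eapply H2 ].

Lemma const_of_deriv f f' : (forall x, derivable_pt_lim f x (f' x)) ->
  (forall x, f' x = 0) -> forall x y, f x = f y.
Proof.
  intros H H0.
  pose (pr := (fun x => exist _ (f' x) (H x)) : derivable f).
  apply (null_derivative_1 f pr). intro x. simpl. apply H0.
Qed.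

Theorem mainTheorem6 (k Omega : R) (phi theta : R -> R) :
  C2 phi -> C2 theta ->
  is_solution (fun x t =>
    Cmul (Cofr (phi x)) (Cexpi (k * x - Omega * t + theta x))) ->
  (exists c : R, forall x, phi x = c) /\
  (forall c : R, (forall x, phi x = c) -> c <> 0 ->
     Omega <> c ^ 2 /\
     forall x, derivable_pt_lim theta x
       ((k * c ^ 2 - k * Omega + 1) / (Omega - c ^ 2))).
Proof.
  intros [p1 [p2 [Hp1 [Hp2 _]]]] [t1 [t2 [Ht1 [Ht2 _]]]]
    [ut [ux [utx [Hut [Hux [Hutx Heq]]]]]].
  assert (Hut' : forall y s, ut y s = mkC
    (Omega * phi y * sin (k * y - Omega * s + theta y))
    (- Omega * phi y * cos (k * y - Omega * s + theta y))).
  { intros y s. destruct (Hut y s) as [H1 H2]. simpl in H1, H2.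
    assert (E1 : Re (ut y s) = Omega * phi y * sin (k * y - Omega * s + theta y)).
    { eapply uniqueness_limite; [exact H1|]. eapply dlim_eq; [dt Hp1 Ht1|]; cbv beta. cbv beta; ring. }
    assert (E2 : Im (ut y s) = - Omega * phi y * cos (k * y - Omega * s + theta y)).
    { eapply uniqueness_limite; [exact H2|]. eapply dlim_eq; [dt Hp1 Ht1|]; cbv beta. ring. }
    destruct (ut y s); simpl in *; subst; reflexivity. }
  assert (Key : forall x, (Omega - phi x ^ 2) * p1 x = 0 /\
     (Omega - phi x ^ 2) * (phi x * (k + t1 x)) = phi x).
  { intros x.
    set (C := cos (k * x - Omega * 0 + theta x)).
    set (S := sin (k * x - Omega * 0 + theta x)).
    assert (HSC : S ^ 2 + C ^ 2 = 1) by (unfold S, C; rewrite <- (sin2_cos2 (k * x - Omega * 0 + theta x)); unfold Rsqr; ring).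
    destruct (Hux x 0) as [H1 H2]. simpl in H1, H2.
    assert (X1 : Re (ux x 0) = p1 x * C - phi x * S * (k + t1 x)).
    { eapply uniqueness_limite; [exact H1|]. eapply dlim_eq; [dt Hp1 Ht1|]; cbv beta.
      unfold C, S; ring. }
    assert (X2 : Im (ux x 0) = p1 x * S + phi x * C * (k + t1 x)).
    { eapply uniqueness_limite; [exact H2|]. eapply dlim_eq; [dt Hp1 Ht1|]; cbv beta.
      unfold C, S; ring. }
    destruct (Hutx x 0) as [H3 H4].
    assert (Y1 : Re (utx x 0) = Omega * (p1 x * S + phi x * C * (k + t1 x))).
    { eapply uniqueness_limite; [exact H3|].
      replace (fun y => Re (ut y 0)) with
        (fun y => Omega * phi y * sin (k * y - Omega * 0 + theta y))
        by (apply functional_extensionality; intro y; rewrite Hut'; reflexivity).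
      eapply dlim_eq; [dt Hp1 Ht1|]; cbv beta. unfold C, S; ring. }
    assert (Y2 : Im (utx x 0) = - Omega * (p1 x * C - phi x * S * (k + t1 x))).
    { eapply uniqueness_limite; [exact H4|].
      replace (fun y => Im (ut y 0)) with
        (fun y => - Omega * phi y * cos (k * y - Omega * 0 + theta y))
        by (apply functional_extensionality; intro y; rewrite Hut'; reflexivity).
      eapply dlim_eq; [dt Hp1 Ht1|]; cbv beta. unfold C, S; ring. }
    pose proof (f_equal Re (Heq x 0)) as E1.
    pose proof (f_equal Im (Heq x 0)) as E2.
    simpl in E1, E2. fold C in E1, E2. fold S in E1, E2.
    rewrite Y1, X1, X2 in E1. rewrite Y2, X1, X2 in E2.
    set (a := p1 x) in *. set (m := phi x) in *.
    assert (N : Cnorm2 (Cmul (Cofr m) (Cexpi (k * x - Omega * 0 + theta x))) = m ^ 2).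
    { unfold Cnorm2; simpl. fold C; fold S.
      transitivity (m^2 * (S^2 + C^2)); [ring | rewrite HSC; ring]. }
    rewrite N in E1, E2.
    set (b := m * (k + t1 x)).
    assert (F1 : (Omega - m^2) * (a * S + b * C) = m * C).
    { unfold b. ring_simplify in E1. ring_simplify. lra. }
    assert (F2 : (Omega - m^2) * (b * S - a * C) = m * S).
    { unfold b. ring_simplify in E2. ring_simplify. lra. }
    split.
    - replace ((Omega - m^2) * a) with ((Omega - m^2) * a * (S^2 + C^2)) by (rewrite HSC; ring).
      replace ((Omega - m ^ 2) * a * (S ^ 2 + C ^ 2)) with
        (S * ((Omega - m^2) * (a * S + b * C)) - C * ((Omega - m^2) * (b * S - a * C))) by ring.
      rewrite F1, F2. ring.
    - replace ((Omega - m^2) * b) with ((Omega - m^2) * b * (S^2 + C^2)) by (rewrite HSC; ring).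
      replace ((Omega - m ^ 2) * b * (S ^ 2 + C ^ 2)) with
        (C * ((Omega - m^2) * (a * S + b * C)) + S * ((Omega - m^2) * (b * S - a * C))) by ring.
      rewrite F1, F2. replace (C * (m * C) + S * (m * S)) with (m * (S^2+C^2)) by ring.
      rewrite HSC; ring. }
  assert (PP : forall x, phi x * p1 x = 0).
  { intro x. destruct (Key x) as [K1 K2].
    destruct (Req_dec (phi x) 0) as [Z|Z]; [rewrite Z; ring|].
    destruct (Req_dec (Omega - phi x ^ 2) 0) as [W|W].
    - rewrite W in K2. exfalso; apply Z; lra.
    - apply Rmult_integral in K1. destruct K1 as [K1|K1]; [contradiction|rewrite K1; ring]. }
  assert (Sq : forall x, phi x * phi x = phi 0 * phi 0).
  { intro x. apply (const_of_deriv (fun y => phi y * phi y) (fun y => p1 y * phi y + phi y * p1 y)).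
    - intro y. apply (Dmul phi phi); apply Hp1.
    - intro y. cbv beta. rewrite Rmult_comm, PP. ring. }
  split.
  - destruct (Req_dec (phi 0) 0) as [Z|Z].
    + exists 0. intro x. specialize (Sq x). rewrite Z in Sq. nra.
    + exists (phi 0). intro x.
      apply (const_of_deriv phi p1 Hp1).
      intro y. assert (phi y <> 0) by (intro E; specialize (Sq y); rewrite E in Sq; nra).
      specialize (PP y). apply Rmult_integral in PP. destruct PP; [contradiction|assumption].
  - intros c Hc Hc0.
    assert (NE : Omega <> c ^ 2).
    { intro E. destruct (Key 0) as [_ K2]. rewrite Hc, E in K2. apply Hc0. lra. }
    split; [exact NE|].
    intro x. destruct (Key x) as [_ K2]. rewrite Hc in K2.
    eapply dlim_eq; [apply Ht1|].
    assert (Omega - c^2 <> 0) by lra.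
    apply Rmult_eq_reg_l with (r := c * (Omega - c^2)).
    + field_simplify; [|assumption]. rewrite <- (Rmult_1_r c) at 3. nra.
    + apply Rmult_integral_contrapositive; split; assumption.
Qed.
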